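(* Let $\mathbf U$ be a group variety and let $\Gamma$ and $\Delta$ be finite connected directed graphs such that $\Delta$ is a minor of $\Gamma$. If $\Delta$ does not have property $\mathrm{P}(\mathbf U)$, then $\Gamma$ does not have property $\mathrm{P}(\mathbf U)$.
   Context: All graphs are finite directed graphs, possibly with loops and multiple edges. A graph $\Gamma$ has vertex set $V(\Gamma)$ and edge set $E(\Gamma)$, and each edge $e$ has an initial vertex $\iota e$ and a terminal vertex $\tau e$. A subgraph is regarded as a set of vertices and edges (containing the endpoints of its edges); unions and intersections of subgraphs are taken as sets of vertices and edges. Connectedness refers to the underlying undirected graph. Let $\overline{\Gamma}$ be the graph with vertex set $V(\Gamma)$ and edge set $E(\Gamma)\sqcup E(\Gamma)^{-1}$, where for $e\in E(\Gamma)$ the formal edge $e^{-1}$ goes from $\tau e$ to $\iota e$. A path $p$ in $\overline{\Gamma}$ is either an empty path at a vertex or a sequence $e_1\cdots e_n$ of edges of $\overline{\Gamma}$ with $\tau e_i=\iota e_{i+1}$; it has initial vertex $\iota p$ and terminal vertex $\tau p$, and is regarded as a word over the alphabet $E(\Gamma)\cup E(\Gamma)^{-1}$. The span $\langle p\rangle$ is the subgraph of $\Gamma$ consisting of the vertices traversed by $p$ and the edges $e\in E(\Gamma)$ such that $e$ or $e^{-1}$ occurs in $p$. For a group variety $\mathbf{U}$ and words $u,v$ over $X\cup X^{-1}$, write $u\equiv_{\mathbf U} v$ if $u$ and $v$ represent the same element of the relatively free group of $\mathbf U$ on $X$ (i.e. the identity $u=v$ holds in $\mathbf U$), and $[u]_{\mathbf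 U}$ for the class of $u$. The free $g\mathbf U$-category on $\Gamma$ has vertex set $V(\Gamma)$; its arrows from $i$ to $j$ are the triples $(i,[p]_{\mathbf U},j)$ with $p$ an $(i,j)$-path in $\overline\Gamma$, and $(i,[p]_{\mathbf U},j)(j,[q]_{\mathbf U},k)=(i,[pq]_{\mathbf U},k)$; for an arrow $x=(i,[p]_{\mathbf U},j)$ put $\iota x=i$, $\tau x=j$. For each arrow $x$ define subgraphs of $\Gamma$: $C_0(x)=\bigcap\{\langle p\rangle : p \text{ a path in }\overline\Gamma \text{ with } (\iota p,[p]_{\mathbf U},\tau p)=x\}$; $P_n(x)$ is the connected component of $C_n(x)$ containing $\iota x$; $C_{n+1}(x)=\bigcap\{P_n(x_1)\cup\cdots\cup P_n(x_k) : k\ge 1,\ x_1,\dots,x_k \text{ arrows with } x_1\cdots x_k=x\}$; and $P(x)=\bigcap_{n\ge 0}P_n(x)$. A connected graph $\Gamma$ has property $\mathrm{P}(\mathbf U)$ if $\tau x\in P(x)$ for every arrow $x$ of the free $g\mathbf U$-category on $\Gamma$. A graph $\Delta$ is a minor of $\Gamma$ if $\Delta$ can be obtained from $\Gamma$ by a finite sequence of the following operations: contracting an edge $e$ with $\iota e\neq\tau e$ (removing $e$ and identifying its two endpoints into one vertex), deleting an edge, deleting a vertex together with its incident edges, and reversing the direction of an edge. *)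

(* Defs.v *)
From Stdlib Require List.
From mathcomp Require Import all_boot.
Set Implicit Arguments. Unset Strict Implicit. Unset Printing Implicit Defensive.

Record group := Group {
  gcar :> Type;
  gmul : gcar -> gcar -> gcar;
  ginv : gcar -> gcar;
  gone : gcar;
  gmulA : forall x y z, gmul x (gmul y z) = gmul (gmul x y) z;
  gmul1x : forall x, gmul gone x = x;
  gmulx1 : forall x, gmul x gone = x;
  gmulVx : forall x, gmul (ginv x) x = gone;
  gmulxV : forall x, gmul x (ginv x) = gone }.

(* Words over X u X^{-1}: a letter (a, true) is a, (a, false) is a^{-1}. *)
Definition word (A : Type) := seq (A * bool).

Definition eval_word (G : group) (A : Type) (f : A -> G) (w : word A) : G :=
  foldr (fun l acc => gmul (if l.2 then f l.1 else ginv (f l.1)) acc) (gone G) w.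

(* A group variety, given by its defining set of laws (words w in countably
   many variables; the law is w = 1).  The variety is the class of all groups
   satisfying every law. *)
Definition variety := word nat -> Prop.

Definition in_variety (U : variety) (G : group) : Prop :=
  forall w, U w -> forall f : nat -> G, eval_word f w = gone G.

Definition U_equiv (U : variety) (A : Type) (u v : word A) : Prop :=
  forall G : group, in_variety U G -> forall f : A -> G, eval_word f u = eval_word f v.

Record graph := Graph {
  gV : finType;
  gE : finType;
  src : gE -> gV;
  tgt : gE -> gV }.

Definition adj (G : graph) : rel (gV G) := fun x y =>
  [exists e : gE G, ((src e == x) && (tgt e == y)) || ((src e == y) && (tgt e == x))].

Definition connected_graph (G : graph) : Prop :=
  forall x y : gV G, connect (@adj G) x y.

Definition lsrc (G : graph) (l : gE G * bool) : gV G := if l.2 then src l.1 else tgt l.1.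
Definition ltgt (G : graph) (l : gE G * bool) : gV G := if l.2 then tgt l.1 else src l.1.

Fixpoint is_path (G : graph) (i : gV G) (p : word (gE G)) (j : gV G) : Prop :=
  match p with
  | [::] => i = j
  | l :: p' => lsrc l = i /\ is_path (ltgt l) p' j
  end.

(* Subgraphs, as (possibly infinite intersections of) sets of vertices and edges. *)
Record subgraph (G : graph) := Subgraph { sV : gV G -> Prop; sE : gE G -> Prop }.

Definition span (G : graph) (i : gV G) (p : word (gE G)) : subgraph G :=
  Subgraph (fun v => v = i \/ exists l, List.In l p /\ (v = lsrc l \/ v = ltgt l))
           (fun e => List.In (e, true) p \/ List.In (e, false) p).

(* connected component of the subgraph S containing i (empty if i is not in S) *)
Definition sub_step (G : graph) (S : subgraph G) (x y : gV G) : Prop :=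
  exists e, sE S e /\ ((src e = x /\ tgt e = y) \/ (src e = y /\ tgt e = x)).

Inductive rt_clos (T : Type) (R : T -> T -> Prop) (x : T) : T -> Prop :=
  | rt_refl : rt_clos R x x
  | rt_step y z : rt_clos R x y -> R y z -> rt_clos R x z.

Definition component (G : graph) (S : subgraph G) (i : gV G) : subgraph G :=
  Subgraph (fun v => sV S i /\ rt_clos (sub_step S) i v)
           (fun e => sE S e /\ sV S i /\ rt_clos (sub_step S) i (src e)).

(* ---------- The sets C_n, P_n of an arrow x = (i, [p]_U, j) ----------
   Arrows are handled through representatives (i, p, j) with is_path i p j;
   all definitions below only depend on the U-class of p. *)

Definition C0 (U : variety) (G : graph) (i : gV G) (p : word (gE G)) (j : gV G)
  : subgraph G :=
  Subgraph (fun v => forall q, is_path i q j -> U_equiv U q p -> sV (span i q) v)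
           (fun e => forall q, is_path i q j -> U_equiv U q p -> sE (span i q) e).

Fixpoint factorization (G : graph) (i : gV G)
    (xs : seq (gV G * word (gE G) * gV G)) (j : gV G) : Prop :=
  match xs with
  | [::] => i = j
  | (a, p, b) :: xs' => a = i /\ is_path a p b /\ factorization b xs' j
  end.

Definition prod_word (G : graph) (xs : seq (gV G * word (gE G) * gV G)) : word (gE G) :=
  flatten [seq x.1.2 | x <- xs].

Fixpoint Cn (U : variety) (G : graph) (n : nat) (i : gV G) (p : word (gE G)) (j : gV G)
  {struct n} : subgraph G :=
  match n with
  | 0 => C0 U i p j
  | n'.+1 =>
    Subgraph
      (fun v => forall xs, xs <> [::] -> factorization i xs j ->
                  U_equiv U (prod_word xs) p ->
                  exists x, List.In x xs /\ sV (component (Cn U n' x.1.1 x.1.2 x.2) x.1.1) v)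
      (fun e => forall xs, xs <> [::] -> factorization i xs j ->
                  U_equiv U (prod_word xs) p ->
                  exists x, List.In x xs /\ sE (component (Cn U n' x.1.1 x.1.2 x.2) x.1.1) e)
  end.

Definition Pn (U : variety) (G : graph) (n : nat) (i : gV G) (p : word (gE G)) (j : gV G)
  : subgraph G := component (Cn U n i p j) i.

(* property P(U): tau x lies in P(x) = \bigcap_n P_n(x) for every arrow x *)
Definition has_property_P (U : variety) (G : graph) : Prop :=
  forall (i j : gV G) (p : word (gE G)), is_path i p j -> forall n, sV (Pn U n i p j) j.

(* Each operation is stated up to isomorphism of the resulting graph. *)
Definition graph_iso (G H : graph) : Prop :=
  exists (fv : gV H -> gV G) (fe : gE H -> gE G),
    bijective fv /\ bijective fe /\
    (forall y, src (fe y) = fv (src y)) /\ (forall y, tgt (fe y) = fv (tgt y)).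

Definition delete_edge (G H : graph) : Prop :=
  exists (e : gE G) (fv : gV H -> gV G) (fe : gE H -> gE G),
    bijective fv /\ injective fe /\ (forall y, fe y <> e) /\
    (forall x, x <> e -> exists y, fe y = x) /\
    (forall y, src (fe y) = fv (src y)) /\ (forall y, tgt (fe y) = fv (tgt y)).

Definition delete_vertex (G H : graph) : Prop :=
  exists (v : gV G) (fv : gV H -> gV G) (fe : gE H -> gE G),
    injective fv /\ (forall y, fv y <> v) /\ (forall x, x <> v -> exists y, fv y = x) /\
    injective fe /\
    (forall x, src x <> v -> tgt x <> v -> exists y, fe y = x) /\
    (forall y, src (fe y) = fv (src y)) /\ (forall y, tgt (fe y) = fv (tgt y)).

Definition contract_edge (G H : graph) : Prop :=
  exists (e : gE G), src e <> tgt e /\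
  exists (fv : gV G -> gV H) (fe : gE H -> gE G),
    (forall y, exists x, fv x = y) /\
    (forall x x', fv x = fv x' <->
       (x = x' \/ ((x = src e \/ x = tgt e) /\ (x' = src e \/ x' = tgt e)))) /\
    injective fe /\ (forall y, fe y <> e) /\
    (forall x, x <> e -> exists y, fe y = x) /\
    (forall y, src y = fv (src (fe y))) /\ (forall y, tgt y = fv (tgt (fe y))).

Definition reverse_edge (G H : graph) : Prop :=
  exists (e : gE G) (fv : gV H -> gV G) (fe : gE H -> gE G),
    bijective fv /\ bijective fe /\
    (forall y, fv (src y) = if fe y == e then tgt (fe y) else src (fe y)) /\
    (forall y, fv (tgt y) = if fe y == e then src (fe y) else tgt (fe y)).

Definition minor_step (G H : graph) : Prop :=
  graph_iso G H \/ delete_edge G H \/ delete_vertex G H \/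
  contract_edge G H \/ reverse_edge G H.

Definition minor (G D : graph) : Prop := rt_clos minor_step G D.

(* Main.v *)
Require Import Defs.
From Stdlib Require List.
From mathcomp Require Import all_boot.
Set Implicit Arguments. Unset Strict Implicit. Unset Printing Implicit Defensive.

Lemma ginv_uniq (G : group) (x y : G) : gmul x y = gone G -> y = ginv x.
Proof.
move=> H; rewrite -(gmul1x y) -(gmulVx x) -gmulA H gmulx1 //.
Qed.

Lemma ginv_inv (G : group) (x : G) : ginv (ginv x) = x.
Proof. symmetry; apply: ginv_uniq; exact: gmulVx. Qed.

Lemma ginv_one (G : group) : ginv (gone G) = gone G.
Proof. symmetry; apply: ginv_uniq; exact: gmulx1. Qed.

Lemma ginv_mul (G : group) (x y : G) : ginv (gmul x y) = gmul (ginv y) (ginv x).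
Proof.
symmetry; apply: ginv_uniq.
by rewrite -gmulA (gmulA y) gmulxV gmul1x gmulxV.
Qed.

Definition lv (G : group) (A : Type) (f : A -> G) (l : A * bool) : G :=
  if l.2 then f l.1 else ginv (f l.1).

Lemma eval_cons (G : group) (A : Type) (f : A -> G) l w :
  eval_word f (l :: w) = gmul (lv f l) (eval_word f w).
Proof. by []. Qed.

Lemma eval_nil (G : group) (A : Type) (f : A -> G) : eval_word f [::] = gone G.
Proof. by []. Qed.

Lemma eval_cat (G : group) (A : Type) (f : A -> G) u v :
  eval_word f (u ++ v) = gmul (eval_word f u) (eval_word f v).
Proof.
elim: u => [|l u IH] /=; first by rewrite gmul1x.
by rewrite IH gmulA.
Qed.

Lemma path_cat (G : graph) (i m j : gV G) p q :
  is_path i p m -> is_path m q j -> is_path i (p ++ q) j.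
Proof.
elim: p i => [|l p IH] i /=; first by move=> -> .
by move=> [H1 H2] H3; split => //; apply: IH.
Qed.

Lemma fact_path (G : graph) (i j : gV G) xs :
  factorization i xs j -> is_path i (prod_word xs) j.
Proof.
elim: xs i => [|[[a p] b] xs IH] i /=; first by [].
move=> [-> [Hp Hf]]; rewrite /prod_word /=.
apply: path_cat Hp _; exact: IH.
Qed.

Lemma fact_in (G : graph) (i j : gV G) xs x :
  factorization i xs j -> List.In x xs -> is_path x.1.1 x.1.2 x.2.
Proof.
elim: xs i => [|[[a p] b] xs IH] i //=.
move=> [-> [Hp Hf]] [<-|Hin] //; exact: IH Hf Hin.
Qed.

Definition Lw (Ga De : graph) (ell : gE De * bool -> word (gE Ga)) (q : word (gE De))
  : word (gE Ga) := flatten (map ell q).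

Lemma Lw_cat (Ga De : graph) (ell : gE De * bool -> word (gE Ga)) u v :
  Lw ell (u ++ v) = Lw ell u ++ Lw ell v.
Proof. by rewrite /Lw map_cat flatten_cat. Qed.

Lemma Lw_in (Ga De : graph) (ell : gE De * bool -> word (gE Ga)) q l :
  List.In l (Lw ell q) -> exists a, List.In a q /\ List.In l (ell a).
Proof.
elim: q => [|a q IH] //= H.
case: (List.in_app_or _ _ _ H) => [H1|H2].
  by exists a; split; [left|].
by case: (IH H2) => a' [Ha Hl]; exists a'; split; [right|].
Qed.

Definition maps (Ga De : graph) (pi : gV Ga -> gV De) (piE : gE Ga -> option (gE De))
  (S : subgraph Ga) (T : subgraph De) : Prop :=
  (forall w, sV S w -> sV T (pi w)) /\
  (forall e, sE S e -> match piE e with Some d => sE T d | None => pi (src e) = pi (tgt e) end).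

Lemma maps_component (Ga De : graph) (pi : gV Ga -> gV De) (piE : gE Ga -> option (gE De))
  (H4 : forall e d, piE e = Some d -> (pi (src e) = src d /\ pi (tgt e) = tgt d) \/
                                      (pi (src e) = tgt d /\ pi (tgt e) = src d))
  S T x : maps pi piE S T -> maps pi piE (component S x) (component T (pi x)).
Proof.
move=> [MV ME].
have RT : forall y, rt_clos (sub_step S) x y -> rt_clos (sub_step T) (pi x) (pi y).
  move=> y; elim => [|y1 z _ IH [e [He Hyz]]]; first exact: rt_refl.
  have := ME e He; case Hd: (piE e) => [d|] Hm.
    apply: (rt_step IH); exists d; split => //.
    by case: (H4 _ _ Hd) => [[E1 E2]|[E1 E2]]; case: Hyz => [[<- <-]|[<- <-]];
      rewrite E1 E2; auto.
  by move: IH; case: Hyz => [[<- <-]|[<- <-]]; rewrite Hm.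
split.
  by move=> w /= [Hx Hr]; split; [exact: MV|exact: RT].
move=> e /= [He [Hx Hr]]; have := ME e He; case Hd: (piE e) => [d|] Hm //.
split => //; split; first exact: MV.
case: (H4 _ _ Hd) => [[E1 _]|[E1 E2]]; first by rewrite -E1; exact: RT.
apply: (rt_step (RT _ Hr)); exists d; split => //; rewrite E1; auto.
Qed.

Lemma U_refl (U : variety) (A : Type) (u : word A) : U_equiv U u u.
Proof. by move=> G _ f. Qed.

Lemma sim_core (U : variety) (Ga De : graph) (s : gV De -> gV Ga)
  (ell : gE De * bool -> word (gE Ga)) (pi : gV Ga -> gV De) (piE : gE Ga -> option (gE De))
  (H1 : forall a, is_path (s (lsrc a)) (ell a) (s (ltgt a)))
  (H2 : forall i j q q', is_path i q j -> is_path i q' j -> U_equiv U q q' ->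
          U_equiv U (Lw ell q) (Lw ell q'))
  (H3 : forall v, pi (s v) = v)
  (H4 : forall e d, piE e = Some d -> (pi (src e) = src d /\ pi (tgt e) = tgt d) \/
                                      (pi (src e) = tgt d /\ pi (tgt e) = src d))
  (H5 : forall a l, List.In l (ell a) ->
          (pi (lsrc l) = lsrc a \/ pi (lsrc l) = ltgt a) /\
          (pi (ltgt l) = lsrc a \/ pi (ltgt l) = ltgt a))
  (H6 : forall a l, List.In l (ell a) ->
          match piE l.1 with Some d => d = a.1 | None => pi (src l.1) = pi (tgt l.1) end) :
  has_property_P U Ga -> forall i j p, is_path i p j -> forall n, sV (@Pn U De n i p j) j.
Proof.
move=> HP.
have LP : forall q i j, is_path i q j -> is_path (s i) (Lw ell q) (s j).
  elim => [|a q IH] i j /=; first by move=> ->.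
  move=> [Ha Hq]; rewrite -Ha; apply: path_cat (H1 a) _; exact: IH.
have SV : forall i q w, sV (span (s i) (Lw ell q)) w -> sV (span i q) (pi w).
  move=> i q w /= [->|[l [Hl Hw]]]; first by left; rewrite H3.
  case: (Lw_in Hl) => a [Ha Hla]; right; exists a; split => //.
  by case: (H5 _ _ Hla) => [A B]; case: Hw => ->.
have SE : forall i q e, sE (span (s i) (Lw ell q)) e ->
   match piE e with Some d => sE (span i q) d | None => pi (src e) = pi (tgt e) end.
  move=> i q e /= Hin.
  have [b Hb] : exists b, List.In (e, b) (Lw ell q) by case: Hin => H; eexists; exact: H.
  case: (Lw_in Hb) => a [Ha Hla]; have := H6 _ _ Hla; rewrite /=.
  case: (piE e) => [d ->|] //; case: a Ha {Hla} => d0 [] /= Ha; auto.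
have C0M : forall i p j, is_path i p j ->
   maps pi piE (C0 U (s i) (Lw ell p) (s j)) (C0 U i p j).
  move=> i p j Hp; split.
    move=> w /= Hw q Hq Heq; apply: SV; apply: Hw; [exact: LP|exact: H2 Hq Hp Heq].
  move=> e /= He; case Hd: (piE e) => [d|].
    move=> q Hq Heq; have := SE _ _ _ (He _ (LP _ _ _ Hq) (H2 _ _ _ _ Hq Hp Heq)).
    by rewrite Hd; apply.
  by have := SE _ _ _ (He _ (LP _ _ _ Hp) (@U_refl _ _ _)); rewrite Hd; apply.
pose F := fun x : gV De * word (gE De) * gV De => (s x.1.1, Lw ell x.1.2, s x.2).
have FF : forall xs i j, factorization i xs j -> factorization (s i) (map F xs) (s j).
  elim => [|[[a q] b] xs IH] i j /=; first by move=> ->.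
  move=> [-> [Hq Hf]]; split => //; split; [exact: LP|exact: IH].
have FP : forall xs, prod_word (map F xs) = Lw ell (prod_word xs).
  elim => [|x xs IH] //=; rewrite /prod_word /= Lw_cat; congr (_ ++ _); exact: IH.
have CM : forall n i p j, is_path i p j ->
   maps pi piE (Cn U n (s i) (Lw ell p) (s j)) (Cn U n i p j).
  elim => [|n IH] i p j Hp; first exact: C0M.
  have KEY : forall xs, xs <> [::] -> factorization i xs j -> U_equiv U (prod_word xs) p ->
     (map F xs <> [::] /\ factorization (s i) (map F xs) (s j) /\
      U_equiv U (prod_word (map F xs)) (Lw ell p)).
    move=> xs Hne Hf Heq; split; first by case: xs Hne {Hf Heq}.
    split; first exact: FF.
    rewrite FP; exact: (H2 _ _ _ _ (fact_path Hf) Hp Heq).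
  have COMP : forall xs x, factorization i xs j -> List.In x xs ->
     maps pi piE (component (Cn U n (F x).1.1 (F x).1.2 (F x).2) (F x).1.1)
                 (component (Cn U n x.1.1 x.1.2 x.2) x.1.1).
    move=> xs x Hf Hx.
    have := maps_component H4 (s x.1.1) (IH _ _ _ (fact_in Hf Hx)).
    by rewrite H3.
  split.
    move=> w /= Hw xs Hne Hf Heq.
    case: (KEY _ Hne Hf Heq) => [A [B C]].
    case: (Hw _ A B C) => x' [Hx' Hw'].
    case: (List.in_map_iff F xs x') => [/(_ Hx') [x [Ex Hx]] _].
    exists x; split => //; subst x'; exact: (COMP _ _ Hf Hx).1 _ Hw'.
  move=> e /= He; case Hd: (piE e) => [d|].
    move=> xs Hne Hf Heq.
    case: (KEY _ Hne Hf Heq) => [A [B C]].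
    case: (He _ A B C) => x' [Hx' He'].
    case: (List.in_map_iff F xs x') => [/(_ Hx') [x [Ex Hx]] _].
    exists x; split => //; subst x'; have := (COMP _ _ Hf Hx).2 _ He'.
    by rewrite Hd; apply.
  have Hf1 : factorization i [:: (i, p, j)] j by [].
  case: (KEY [:: (i, p, j)] (fun H => ltac:(discriminate H)) Hf1).
    by rewrite /prod_word /= cats0; apply: U_refl.
  move=> A [B C]; case: (He _ A B C) => x' [[<-|[]] He'].
  by have := (COMP _ _ Hf1 (or_introl erefl)).2 _ He'; rewrite Hd; apply.
move=> i j p Hp n.
have := HP _ _ _ (LP _ _ _ Hp) n.
rewrite /Pn => Hj.
have := (maps_component H4 (s i) (CM n i p j Hp)).1 _ Hj.
by rewrite !H3.
Qed.

Lemma pot_equiv (U : variety) (Ga De : graph) (ell : gE De * bool -> word (gE Ga))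
  (Hpot : forall (G : group) (f : gE Ga -> G), exists (g : gE De -> G) (h : gV De -> G),
     forall a, eval_word f (ell a) = gmul (h (lsrc a)) (gmul (lv g a) (ginv (h (ltgt a))))) :
  forall i j q q', is_path i q j -> is_path i q' j -> U_equiv U q q' ->
          U_equiv U (Lw ell q) (Lw ell q').
Proof.
move=> i j q q' Hq Hq' Heq G HG f.
case: (Hpot G f) => g [h Hh].
have T : forall q i, is_path i q j ->
   eval_word f (Lw ell q) = gmul (h i) (gmul (eval_word g q) (ginv (h j))).
  elim => [|a r IH] k /=.
    by move=> ->; rewrite gmul1x gmulxV.
  move=> [Ha Hr]; rewrite eval_cat Hh (IH _ Hr) Ha -!gmulA.
  by rewrite (gmulA (ginv _) (h _)) gmulVx gmul1x.
by rewrite (T _ _ Hq) (T _ _ Hq') (Heq G HG g).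
Qed.

Lemma embed_P (U : variety) (Ga De : graph) (fv : gV De -> gV Ga) (fe : gE De -> gE Ga)
  (fl : gE De -> bool) :
  injective fv -> injective fe ->
  (forall d, fv (src d) = if fl d then tgt (fe d) else src (fe d)) ->
  (forall d, fv (tgt d) = if fl d then src (fe d) else tgt (fe d)) ->
  has_property_P U Ga -> has_property_P U De.
Proof.
move=> ifv ife Hs Ht HP i0.
pose pi := fun w => odflt i0 [pick v | fv v == w].
pose piE := fun e => [pick d | fe d == e].
pose ell := fun a : gE De * bool => [:: (fe a.1, if fl a.1 then ~~ a.2 else a.2)].
have H3 : forall v, pi (fv v) = v.
  move=> v; rewrite /pi; case: pickP => [v' /eqP /ifv -> //|/(_ v)].
  by rewrite eqxx.
have HE : forall d, piE (fe d) = Some d.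
  move=> d; rewrite /piE; case: pickP => [d' /eqP /ife -> //|/(_ d)].
  by rewrite eqxx.
have E1 : forall d, pi (src (fe d)) = if fl d then tgt d else src d.
  move=> d; case E: (fl d).
    by rewrite -(H3 (tgt d)) Ht E.
  by rewrite -(H3 (src d)) Hs E.
have E2 : forall d, pi (tgt (fe d)) = if fl d then src d else tgt d.
  move=> d; case E: (fl d).
    by rewrite -(H3 (src d)) Hs E.
  by rewrite -(H3 (tgt d)) Ht E.
apply: (@sim_core U Ga De fv ell pi piE).
- case=> d b; rewrite /ell /lsrc /ltgt /=; case: b; rewrite /= Hs Ht;
  by case: (fl d).
- apply: pot_equiv => G f.
  exists (fun d => if fl d then ginv (f (fe d)) else f (fe d)), (fun _ => gone G).
  case=> d b; rewrite /= /lv /= ginv_one gmul1x !gmulx1.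
  by case: (fl d); case: b; rewrite ?ginv_inv.
- exact: H3.
- move=> e d; rewrite /piE; case: pickP => [d' /eqP <- [<-]|//].
  rewrite E1 E2; by case: (fl d'); [right|left].
- case=> d b l /= [<-|[]]; rewrite /lsrc /ltgt /=.
  by case: (fl d) (E1 d) (E2 d); case: b => /= -> ->; auto.
- case=> d b l /= [<-|[]] /=; by rewrite HE.
- exact: HP.
Qed.

Lemma contract_P (U : variety) (Ga De : graph) (e : gE Ga) (fv : gV Ga -> gV De)
  (fe : gE De -> gE Ga) :
  src e <> tgt e ->
  (forall y, exists x, fv x = y) ->
  (forall x x', fv x = fv x' <->
       (x = x' \/ ((x = src e \/ x = tgt e) /\ (x' = src e \/ x' = tgt e)))) ->
  injective fe -> (forall y, fe y <> e) ->
  (forall y, src y = fv (src (fe y))) -> (forall y, tgt y = fv (tgt (fe y))) ->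
  has_property_P U Ga -> has_property_P U De.
Proof.
move=> Hne Hsurj Hiff ife Hfe Hs Ht HP.
have Hex : forall v, exists x, fv x == v.
  by move=> v; case: (Hsurj v) => x Hx; exists x; apply/eqP.
pose s := fun v => xchoose (Hex v).
have Hsv : forall v, fv (s v) = v by move=> v; apply/eqP; exact: (xchooseP (Hex v)).
have FV : forall x y, fv x = fv y ->
   x = y \/ (x = src e /\ y = tgt e) \/ (x = tgt e /\ y = src e).
  move=> x y /Hiff [->|[[->|->] [->|->]]]; auto.
have Hfee : fv (src e) = fv (tgt e) by apply/Hiff; auto.
pose corr := fun x y : gV Ga =>
  if x == y then [::] else if x == src e then [:: (e, true)] else [:: (e, false)].
have Cpath : forall x y, fv x = fv y -> is_path x (corr x y) y.
  move=> x y /FV [->|[[-> ->]|[-> ->]]]; rewrite /corr.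
  - by rewrite eqxx.
  - by case: (src e =P tgt e) => // _; rewrite eqxx.
  - case: (tgt e =P src e) => [E|_]; first by rewrite E.
    by case: (tgt e =P src e) => [E|_] //; rewrite E.
have Cin : forall x y l, fv x = fv y -> List.In l (corr x y) ->
   l.1 = e /\ fv (lsrc l) = fv x /\ fv (ltgt l) = fv x.
  move=> x y l /FV [->|[[-> ->]|[-> ->]]]; rewrite /corr.
  - by rewrite eqxx.
  - case: (src e =P tgt e) => // _; rewrite eqxx /= => [[<-|[]]];
    rewrite /lsrc /ltgt /=; auto.
  - case: (tgt e =P src e) => [E|_]; first by rewrite E.
    case: (tgt e =P src e) => [E|_] /= [<-|[]]; rewrite /lsrc /ltgt /=; auto.
have Ceval : forall (G : group) (f : gE Ga -> G) x y, fv x = fv y ->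
   eval_word f (corr x y) =
   gmul (if x == src e then f e else gone G) (ginv (if y == src e then f e else gone G)).
  move=> G f x y /FV [->|[[-> ->]|[-> ->]]]; rewrite /corr.
  - by rewrite eqxx /=; case: ifP => _; rewrite gmulxV.
  - case: (src e =P tgt e) => // _; rewrite eqxx /= /lv /=.
    by rewrite (introF eqP (nesym Hne)) ginv_one !gmulx1.
  - rewrite (introF eqP (nesym Hne)) eqxx /= /lv /=.
    by rewrite gmul1x gmulx1.
pose ap := fun a : gE De * bool => (fe a.1, a.2).
pose ell := fun a : gE De * bool =>
  corr (s (lsrc a)) (lsrc (ap a)) ++ ap a :: corr (ltgt (ap a)) (s (ltgt a)).
have A1 : forall a, fv (lsrc (ap a)) = lsrc a.
  by case=> d []; rewrite /lsrc /= -?Hs -?Ht.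
have A2 : forall a, fv (ltgt (ap a)) = ltgt a.
  by case=> d []; rewrite /ltgt /= -?Hs -?Ht.
have HE : forall d, [pick d' | fe d' == fe d] = Some d.
  move=> d; case: pickP => [d' /eqP /ife -> //|/(_ d)].
  by rewrite eqxx.
have He : [pick d' | fe d' == e] = None.
  case: pickP => [d' /eqP /Hfe //|//].
move=> i j p Hp n.
apply: (@sim_core U Ga De s ell fv (fun x => [pick d | fe d == x])) HP _ _ _ Hp n.
- move=> a; rewrite /ell; apply: path_cat.
    apply: Cpath; by rewrite Hsv A1.
  split => //; apply: Cpath; by rewrite Hsv A2.
- apply: pot_equiv => G f.
  pose c := fun x => if x == src e then f e else gone G.
  exists (fun d => gmul (ginv (c (src (fe d)))) (gmul (f (fe d)) (c (tgt (fe d))))).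
  exists (fun v => c (s v)).
  move=> a; rewrite /ell eval_cat eval_cons !Ceval; last 2 first.
  - by rewrite Hsv A2.
  - by rewrite Hsv A1.
  rewrite -/(c _) -/(c _) -/(c _) -/(c _) -!gmulA.
  congr (gmul _ _).
  case: a => d [] /=; rewrite /lv /lsrc /ltgt /=.
    by rewrite !gmulA.
  rewrite !ginv_mul ginv_inv -!gmulA.
  by rewrite ?gmulA.
- exact: Hsv.
- move=> x d; case: pickP => [d' /eqP <- [<-]|//].
  by left; rewrite -Hs -Ht.
- move=> a l Hl; case: (List.in_app_or _ _ _ Hl) => [H|[E|H]]; try subst l.
  + have [_ [-> ->]] := Cin _ _ _ (etrans (Hsv _) (esym (A1 a))) H.
    by rewrite Hsv; auto.
  + by rewrite A1 A2; auto.
  + have [_ [-> ->]] := Cin _ _ _ (etrans (A2 a) (esym (Hsv _))) H.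
    by rewrite A2; auto.
- move=> a l Hl; case: (List.in_app_or _ _ _ Hl) => [H|[E|H]]; try subst l.
  + have [-> _] := Cin _ _ _ (etrans (Hsv _) (esym (A1 a))) H.
    by rewrite He.
  + by rewrite /= HE.
  + have [-> _] := Cin _ _ _ (etrans (A2 a) (esym (Hsv _))) H.
    by rewrite He.
Qed.

Lemma step_P (U : variety) (G H : graph) :
  minor_step G H -> has_property_P U G -> has_property_P U H.
Proof.
case=> [[fv [fe [bv [be [Hs Ht]]]]]|[[e [fv [fe [bv [ie [_ [_ [Hs Ht]]]]]]]]|
        [[v [fv [fe [iv [_ [_ [ie [_ [Hs Ht]]]]]]]]]|
        [[e [Hne [fv [fe [Hsu [Hiff [ie [Hfe [_ [Hs Ht]]]]]]]]]]|
         [e [fv [fe [bv [be [Hs Ht]]]]]]]]]].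
- apply: (@embed_P U G H fv fe (fun _ => false)); [exact: bij_inj|exact: bij_inj|by []|by []].
- apply: (@embed_P U G H fv fe (fun _ => false)); [exact: bij_inj|exact: ie|by []|by []].
- apply: (@embed_P U G H fv fe (fun _ => false)); [exact: iv|exact: ie|by []|by []].
- exact: (@contract_P U G H e fv fe).
- apply: (@embed_P U G H fv fe (fun y => fe y == e)); [exact: bij_inj|exact: bij_inj|by []|by []].
Qed.

Theorem proposition3p1 (U : variety) (Gamma Delta : graph) :
  connected_graph Gamma -> connected_graph Delta ->
  minor Gamma Delta -> ~ has_property_P U Delta -> ~ has_property_P U Gamma.
Proof.
move=> _ _ Hm HnD HG; apply: HnD.
elim: Hm => [//|y z _ IH Hst]; exact: step_P Hst IH.
Qed.
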